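(* Let $\Sigma$ be a finite alphabet, let $y^* = y^*_1 \cdots y^*_n \in \Sigma^*$, let $p \in \Sigma^*$, and let $m(p) = \min_{0 \le j \le n} D(p, y^*_{1..j})$. Then $$\min_{s \in \Sigma^*} D(p\,s,\; y^* ) \;=\; m(p).$$ Moreover, the set of minimizers is exactly $$\{\, s \in \Sigma^* : D(p\,s, y^* ) = m(p)\,\} \;=\; \{\, y^*_{j+1..n} \;:\; 0 \le j \le n,\ D(p, y^*_{1..j}) = m(p) \,\}.$$ In words: the optimal completions of $p$ are exactly the suffixes $y^*_{j+1..n}$ of $y^*$ for which the prefix $y^*_{1..j}$ attains the minimum edit distance to $p$.
   Context: $D(u,v)$ denotes the Levenshtein edit distance between finite strings $u,v$: the minimum number of single-symbol insertions, deletions and substitutions needed to transform $u$ into $v$. For a string $y^*$ of length $n$, $y^*_{1..j}$ denotes its prefix of length $j$ and $y^*_{j+1..n}$ the complementary suffix; $y^*_{1..0}$ and $y^*_{n+1..n}$ are the empty string. Juxtaposition $p\,s$ denotes concatenation. *)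

(* Defs.v *)
From mathcomp Require Import all_boot.
Set Implicit Arguments. Unset Strict Implicit. Unset Printing Implicit Defensive.

(* Levenshtein edit distance, via the standard recursion:
   D [] v = |v|, D u [] = |u|,
   D (a::u) (b::v) = min (D u v + [a != b]) (D u (b::v) + 1) (D (a::u) v + 1). *)
Fixpoint lev {T : eqType} (u v : seq T) : nat :=
  match u with
  | [::] => size v
  | a :: u' =>
    let fix levu (v : seq T) : nat :=
      match v with
      | [::] => size u
      | b :: v' => minn (lev u' v' + (a != b)) (minn (lev u' v).+1 (levu v').+1)
      end in levu v
  end.

Definition mpref {T : eqType} (p y : seq T) : nat :=
  \big[minn/lev p y]_(j < (size y).+1) lev p (take j y).

(* Main.v *)
Require Import Defs.
From mathcomp Require Import all_boot.
From mathcomp Require Import zify.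

Section L.
Variable T : eqType.
Implicit Types u v w x y : seq T.

Lemma lev0l v : lev [::] v = size v. Proof. by []. Qed.
Lemma lev0r u : lev u [::] = size u. Proof. by case: u. Qed.
Lemma levcc a u b v : lev (a :: u) (b :: v) =
  minn (lev u v + (a != b)) (minn (lev u (b :: v)).+1 (lev (a :: u) v).+1).
Proof. by []. Qed.

Lemma lev_del a u x : lev (a :: u) x <= (lev u x).+1.
Proof.
case: x => [|b x]; first by rewrite !lev0r.
by rewrite levcc; lia.
Qed.

Lemma lev_ins b u x : lev u (b :: x) <= (lev u x).+1.
Proof.
case: u => [|a u]; first by rewrite !lev0l.
by rewrite levcc; lia.
Qed.

Lemma lev_sub u1 u2 : forall w1 w2,
  lev (u1 ++ u2) (w1 ++ w2) <= lev u1 w1 + lev u2 w2.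
Proof.
elim: u1 => [|a u IH] w1 w2.
  rewrite lev0l /=; elim: w1 => [|b w1 IHw] //=.
  apply: leq_trans (lev_ins _ _ _) _; lia.
elim: w1 => [|b w1 IHw].
  rewrite lev0r /=.
  apply: leq_trans (lev_del _ _ _) _.
  have := IH [::] w2; rewrite lev0r /=; lia.
rewrite !cat_cons levcc [lev (a :: u) (b :: w1)]levcc !addn_minl !leq_min.
have h1 := IH w1 w2. have h2 := IH (b :: w1) w2.
have h3 := IHw.
rewrite !cat_cons in h2 h3. apply/and3P; split; lia.
Qed.

Lemma lev_split u v : forall w, exists2 j, j <= size w &
  lev u (take j w) + lev v (drop j w) <= lev (u ++ v) w.
Proof.
elim: u => [|a u IH] w.
  by exists 0 => //; rewrite take0 drop0 lev0l.
elim: w => [|b w IHw].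
  by exists 0 => //; rewrite /= lev0r /= size_cat; lia.
rewrite cat_cons levcc.
have [j1 Hj1 H1] := IH w.
have [j2 Hj2 H2] := IH (b :: w).
have [j3 Hj3 H3] := IHw.
case: (leqP (lev (u ++ v) w + (a != b))
            (minn (lev (u ++ v) (b :: w)).+1 (lev (a :: u ++ v) w).+1)) => Hm.
  exists j1.+1 => //=.
  have := levcc a u b (take j1 w).
  move: (lev (a :: u) (b :: take j1 w)) => z Hz.
  have : z <= lev u (take j1 w) + (a != b) by rewrite Hz; lia.
  lia.
case: (leqP (lev (u ++ v) (b :: w)) (lev (a :: u ++ v) w)) => Hm2.
  exists j2 => //.
  have := lev_del a u (take j2 (b :: w)); lia.
exists j3.+1 => //. rewrite (_ : take j3.+1 (b :: w) = b :: take j3 w) // (_ : drop j3.+1 (b :: w) = drop j3 w) //.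
have := lev_ins b (a :: u) (take j3 w).
rewrite cat_cons in H3. lia.
Qed.

Lemma lev_refl v : lev v v = 0.
Proof.
elim: v => [|a v IH] //; rewrite levcc IH eqxx; lia.
Qed.

Lemma lev_eq0 (s t : seq T) : lev s t = 0 -> s = t.
Proof.
elim: s t => [|a s IH] [|b t] //.
rewrite levcc => H.
have : lev s t + (a != b) = 0 by lia.
move/eqP; rewrite addn_eq0 => /andP [/eqP /IH -> ].
by rewrite eqb0 negbK => /eqP ->.
Qed.

Lemma mpref_le p y j : j <= size y -> mpref p y <= lev p (take j y).
Proof.
move=> Hj; rewrite /mpref.
have Hj' : j < (size y).+1 by [].
have gen : forall (r : seq 'I_(size y).+1) (i : 'I_(size y).+1) (z0 : nat), i \in r ->
  \big[minn/z0]_(k <- r) lev p (take k y) <= lev p (take i y).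
  elim=> [|k r IHr] i z0 //; rewrite in_cons big_cons => /orP [/eqP ->|Hi].
    exact: geq_minl.
  exact: leq_trans (geq_minr _ _) (IHr _ _ Hi).
have := gen (index_enum _) (Ordinal Hj') (lev p y) (mem_index_enum _).
by [].
Qed.

Lemma mpref_ex p y : exists2 j, j <= size y & lev p (take j y) = mpref p y.
Proof.
rewrite /mpref.
apply: (big_ind (fun n : nat => exists2 j, j <= size y & lev p (take j y) = n)).
- by exists (size y) => //; rewrite take_size.
- move=> x1 x2 [j1 H1 E1] [j2 H2 E2].
  case: (leqP x1 x2) => H.
    by exists j1 => //; rewrite E1; apply/esym/minn_idPl.
  by exists j2 => //; rewrite E2; apply/esym/minn_idPr/ltnW.
- move=> i _; exists i => //; exact: (ltn_ord i).
Qed.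

Lemma main_gen (ystar p : seq T) :
  (forall s : seq T, mpref p ystar <= lev (p ++ s) ystar) /\
  (exists s : seq T, lev (p ++ s) ystar = mpref p ystar) /\
  (forall s : seq T,
     lev (p ++ s) ystar = mpref p ystar <->
     exists j : nat, [/\ j <= size ystar,
                         lev p (take j ystar) = mpref p ystar &
                         s = drop j ystar]).
Proof.
have P1 : forall s : seq T, mpref p ystar <= lev (p ++ s) ystar.
  move=> s; have [j Hj H] := lev_split p s ystar.
  have := @mpref_le p ystar j Hj. lia.
have P3 : forall j, j <= size ystar -> lev p (take j ystar) = mpref p ystar ->
   lev (p ++ drop j ystar) ystar = mpref p ystar.
  move=> j Hj E; apply/eqP; rewrite eqn_leq P1 andbT.
  have := lev_sub p (drop j ystar) (take j ystar) (drop j ystar).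
  rewrite cat_take_drop lev_refl E addn0; done.
split; first exact: P1.
split.
  have [j Hj E] := mpref_ex p ystar.
  by exists (drop j ystar); apply: P3.
move=> s; split.
  move=> E.
  have [j Hj H] := lev_split p s ystar.
  have := @mpref_le p ystar j Hj => H2.
  exists j; split => //; first lia.
  apply: lev_eq0; lia.
by case=> j [Hj E ->]; apply: P3.
Qed.

End L.

Theorem mainTheorem2 (Sigma : finType) (ystar p : seq Sigma) :
  (forall s : seq Sigma, mpref p ystar <= lev (p ++ s) ystar) /\
  (exists s : seq Sigma, lev (p ++ s) ystar = mpref p ystar) /\
  (forall s : seq Sigma,
     lev (p ++ s) ystar = mpref p ystar <->
     exists j : nat, [/\ j <= size ystar,
                         lev p (take j ystar) = mpref p ystar &
                         s = drop j ystar]).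
Proof. exact: main_gen. Qed.
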